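(* Fix $n\ge1$. The set $\mathcal S_n=\{H\in\mathcal H: X_n(H)=0,\ H^{(n)}=z^n\}$ coincides with the set of $H\in\mathcal H$ satisfying $H^{(n)}=z^n$ and $$H^{(j+n)}=z^nH^{(j)}-\sum_{l=1}^{n}H^j_lH^{(n-l)}\qquad\text{for all }j\ge0.$$ In particular, the map $H\mapsto(H^{(1)},\dots,H^{(n-1)})$ is a bijection from $\mathcal S_n$ onto the set of $(n-1)$-tuples of Laurent series of the form $H^{(a)}=z^a+\sum_{l\ge1}H^a_lz^{-l}$ (with arbitrary coefficients).
   Context: Let $z$ be a formal variable and $\mathcal L$ the space of formal Laurent series $\sum_{j\le N} l_j z^j$ (finitely many positive powers of $z$). Let $\mathcal H$ be the set of sequences $H=(H^{(k)})_{k\ge0}$ of elements of $\mathcal L$ with $H^{(0)}=1$ and, for $k\ge1$, $H^{(k)}=z^k+\sum_{l\ge1}H^k_l z^{-l}$; the coefficients $H^k_l$ are coordinates on $\mathcal H$, and we set $H^0_l=0$. The central system (CS) is the family of vector fields $X_j$, $j\ge1$, on $\mathcal H$, with associated times $t_j$, defined by $$\frac{\partial H^{(k)}}{\partial t_j}=H^{(j+k)}-H^{(j)}H^{(k)}+\sum_{l=1}^{k}H^j_lH^{(k-l)}+\sum_{l=1}^{j}H^k_lH^{(j-l)},\qquad k\ge0;$$ the right-hand side contains only negative powers of $z$, so this determines the components $X_j(H^k_l)$. *)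

(* Defs.v *)
From HB Require Import structures.
From mathcomp Require Import all_boot all_order all_algebra.
From mathcomp Require Import zify.
Set Implicit Arguments. Unset Strict Implicit. Unset Printing Implicit Defensive.
Import Order.TTheory GRing.Theory Num.Theory.
Local Open Scope ring_scope.

Section Laurent.
Variable R : comNzRingType.

(* A formal Laurent series  sum_{j <= N} l_j z^j  : coefficient function on
   the integers together with a bound N above which all coefficients vanish. *)
Record laurent := Laurent {
  lcoef : int -> R;
  lbound : int;
  lboundP : forall m : int, lbound < m -> lcoef m = 0 }.

Definition leq_ser (f g : laurent) : Prop := forall m, lcoef f m = lcoef g m.

Definition lzero : laurent.
Proof. by refine (@Laurent (fun _ => 0) 0 _). Defined.

Definition lmonom (k : int) : laurent.
Proof.
refine (@Laurent (fun m => (m == k)%:R) k _).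
by move=> m hm; rewrite gt_eqF.
Defined.

Definition ladd (f g : laurent) : laurent.
Proof.
refine (@Laurent (fun m => lcoef f m + lcoef g m)
          (Num.max (lbound f) (lbound g)) _).
move=> m; rewrite gt_max => /andP[hf hg].
by rewrite !lboundP // addr0.
Defined.

Definition lscale (c : R) (f : laurent) : laurent.
Proof.
refine (@Laurent (fun m => c * lcoef f m) (lbound f) _).
by move=> m hm; rewrite lboundP // mulr0.
Defined.

Definition lsub (f g : laurent) : laurent := ladd f (lscale (-1) g).

(* Cauchy product: (fg)_m = sum_{i = m - Ng}^{Nf} f_i g_(m-i), a finite sum *)
Definition lmul_coef (f g : laurent) (m : int) : R :=
  let d := lbound f + lbound g - m in
  if (0 <= d) then
    \sum_(t < (absz d).+1) lcoef f (m - lbound g + t%:Z) * lcoef g (lbound g - t%:Z)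
  else 0.

Definition lmul (f g : laurent) : laurent.
Proof.
refine (@Laurent (lmul_coef f g) (lbound f + lbound g) _).
move=> m hm; rewrite /lmul_coef ifF //.
apply/negbTE; rewrite -ltNge; lia.
Defined.

Definition lsum (s : seq laurent) : laurent := foldr ladd lzero s.

(* ---------- the space H ----------
   A point H of H is given by its coordinates h k l = H^k_l (k >= 1, l >= 1);
   the values h 0 _ and h _ 0 are not coordinates and are never used. *)

Definition Hc (h : nat -> nat -> R) (k l : nat) : R :=
  if k == 0%N then 0 else h k l.

(* the Laurent series H^(k): H^(0) = 1, H^(k) = z^k + sum_{l>=1} H^k_l z^{-l} *)
Definition Hser (h : nat -> nat -> R) (k : nat) : laurent.
Proof.
refine (@Laurent (fun m : int =>
   if k == 0%N then (m == 0)%:R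
   else if m == k%:Z then 1
   else if m < 0 then h k (absz m) else 0) k%:Z _).
move=> m hm; case: ifP => [/eqP k0|k0].
  by subst k; rewrite gt_eqF.
rewrite gt_eqF // ifF //; apply/negbTE; rewrite -leNgt; lia.
Defined.

Definition CSrhs (h : nat -> nat -> R) (j k : nat) : laurent :=
  ladd (ladd (lsub (Hser h (j + k)) (lmul (Hser h j) (Hser h k)))
             (lsum [seq lscale (Hc h j l) (Hser h (k - l)) | l <- iota 1 k]))
       (lsum [seq lscale (Hc h k l) (Hser h (j - l)) | l <- iota 1 j]).

(* the component X_j(H^k_l) of the vector field X_j at H: the coefficient of
   z^{-l} in dH^(k)/dt_j *)
Definition Xcomp (h : nat -> nat -> R) (j k l : nat) : R :=
  lcoef (CSrhs h j k) (- (l%:Z)).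

Definition X_zero (h : nat -> nat -> R) (j : nat) : Prop :=
  forall k l : nat, (1 <= k)%N -> (1 <= l)%N -> Xcomp h j k l = 0.

Definition in_Sn (n : nat) (h : nat -> nat -> R) : Prop :=
  X_zero h n /\ leq_ser (Hser h n) (lmonom n%:Z).

Definition in_rec (n : nat) (h : nat -> nat -> R) : Prop :=
  leq_ser (Hser h n) (lmonom n%:Z) /\
  forall j : nat,
    leq_ser (Hser h (j + n))
      (lsub (lmul (lmonom n%:Z) (Hser h j))
            (lsum [seq lscale (Hc h j l) (Hser h (n - l)) | l <- iota 1 n])).

Definition H_eq (h h' : nat -> nat -> R) : Prop :=
  forall k : nat, leq_ser (Hser h k) (Hser h' k).

End Laurent.

(* Main.v *)
Require Import Defs.
From HB Require Import structures.
From mathcomp Require Import all_boot all_order all_algebra zify ring.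
Set Implicit Arguments. Unset Strict Implicit. Unset Printing Implicit Defensive.
Import Order.TTheory GRing.Theory Num.Theory.
Local Open Scope ring_scope.

Ltac bl := first [ lia | apply/negbTE; apply/negP; move/eqP; lia
  | apply/negbTE; apply/negP; move=> ?; lia | apply/eqP; lia | apply/idP; lia
  | apply/eqP/eqP; lia | apply/idP/idP; move=> ?; lia ].
Section L.
Variable R : comNzRingType.
Implicit Types (h : nat -> nat -> R) (f g : laurent R).

Lemma lcoef_ladd f g m : lcoef (ladd f g) m = lcoef f m + lcoef g m.
Proof. by []. Qed.
Lemma lcoef_lscale c f m : lcoef (lscale c f) m = c * lcoef f m.
Proof. by []. Qed.
Lemma lcoef_lsub f g m : lcoef (lsub f g) m = lcoef f m - lcoef g m.
Proof. by rewrite /lsub lcoef_ladd lcoef_lscale mulN1r. Qed.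
Lemma lcoef_lsum (F : nat -> laurent R) s m :
  lcoef (lsum [seq F l | l <- s]) m = \sum_(l <- s) lcoef (F l) m.
Proof. elim: s => [|a s IH]; first by rewrite big_nil.
by rewrite big_cons /= -IH. Qed.
Lemma lcoef_Hser h k m : lcoef (Hser h k) m =
  if k == 0%N then (m == 0)%:R else if m == k%:Z then 1
  else if m < 0 then h k (absz m) else 0.
Proof. by []. Qed.
Lemma lcoef_monom k m : lcoef (lmonom R k) m = (m == k)%:R.
Proof. by []. Qed.

Lemma lmul_coef_ext f f' g m : lbound f = lbound f' -> lcoef f =1 lcoef f' ->
  lmul_coef f g m = lmul_coef f' g m.
Proof.
move=> hb hc; rewrite /lmul_coef hb; case: ifP => // _.
by apply: eq_bigr => t _; rewrite hc.
Qed.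

Lemma lcoef_monom_mul a f m : lcoef (lmul (lmonom R a) f) m = lcoef f (m - a).
Proof.
rewrite /= /lmul_coef /=.
case: ifP => hd.
  set d := a + lbound f - m.
  have hd' : (absz d < (absz d).+1)%N by [].
  have hd0 : (0 <= d) by [].
  rewrite (bigD1 (Ordinal hd')) //= big1.
    have -> : (m - lbound f + (absz d)%:Z == a) = true.
      apply/eqP. rewrite /d in hd0 *. lia.
    rewrite mul1r addr0; congr (lcoef f _); rewrite /d in hd0 *; lia.
  move=> t ht; have -> : (m - lbound f + (nat_of_ord t)%:Z == a) = false.
    apply/negbTE/eqP => E; move/eqP: ht; apply; apply/val_inj => /=; rewrite /d in hd0 E *; lia.
  by rewrite mul0r.
by rewrite lboundP //; move/negbT: hd; rewrite -ltNge; lia.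
Qed.


Definition recR h (n k : nat) (m : int) : R :=
  lcoef (Hser h k) (m - n%:Z) - \sum_(l <- iota 1 n) Hc h k l * lcoef (Hser h (n - l)) m.

Lemma rec_coef h n j m :
  lcoef (lsub (lmul (lmonom R n%:Z) (Hser h j))
            (lsum [seq lscale (Hc h j l) (Hser h (n - l)) | l <- iota 1 n])) m
  = recR h n j m.
Proof. by rewrite lcoef_lsub lcoef_monom_mul lcoef_lsum. Qed.

Lemma Hn_zero h n l : (1 <= n)%N -> (1 <= l)%N -> leq_ser (Hser h n) (lmonom R n%:Z) ->
  Hc h n l = 0.
Proof.
move=> hn hl H; have := H (- l%:Z).
rewrite lcoef_Hser lcoef_monom /Hc.
have -> : (n == 0%N) = false by bl.
have -> : (- l%:Z == n%:Z) = false by bl.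
have -> : (- l%:Z < 0) = true by bl.
by have -> : absz (- l%:Z) = l by lia.
Qed.

Lemma CS_coef h n k m : (1 <= n)%N -> leq_ser (Hser h n) (lmonom R n%:Z) ->
  lcoef (CSrhs h n k) m = lcoef (Hser h (n + k)) m - recR h n k m.
Proof.
move=> hn H; rewrite /CSrhs lcoef_ladd lcoef_ladd lcoef_lsub !lcoef_lsum.
rewrite [lcoef (lmul _ _) m](_ : _ = lcoef (lmul (lmonom R n%:Z) (Hser h k)) m); last first.
  by apply: lmul_coef_ext.
rewrite lcoef_monom_mul big1_seq; last first.
  move=> l /andP[_]; rewrite mem_iota => /andP[hl _].
  by rewrite lcoef_lscale Hn_zero // mul0r.
rewrite /recR; under eq_bigr do rewrite lcoef_lscale.
ring.
Qed.

Lemma Hser_pos h a p : lcoef (Hser h a) p%:Z = (p == a)%:R.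
Proof.
rewrite lcoef_Hser; case: eqP => [->|ha] //.
have -> : (p%:Z < 0) = false by bl.
have -> : (p%:Z == a%:Z) = (p == a) by [].
by case: (p == a).
Qed.

Lemma nonneg h n k p : (1 <= n)%N -> (1 <= k)%N ->
  lcoef (Hser h (n + k)) p%:Z = recR h n k p%:Z.
Proof.
move=> hn hk; rewrite /recR Hser_pos.
under eq_bigr do rewrite Hser_pos.
have Hck : forall l, Hc h k l = h k l by move=> l; rewrite /Hc; have -> : (k == 0%N) = false by bl.
under eq_bigr do rewrite Hck.
case: (leqP n p) => hp.
  rewrite big1_seq; last first.
    move=> l /andP[_]; rewrite mem_iota => /andP[hl hl'].
    have -> : (p == n - l)%N = false by bl.
    by rewrite mulr0.
  have -> : p%:Z - n%:Z = (p - n)%N%:Z by lia.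
  rewrite Hser_pos subr0.
  by have -> : (p == n + k)%N = (p - n == k)%N by bl.
have hin : (n - p)%N \in iota 1 n by rewrite mem_iota; lia.
rewrite (bigD1_seq _ hin (iota_uniq _ _)) /= big1_seq; last first.
  move=> l /andP[hl1 hl]; rewrite mem_iota in hl.
  have -> : (p == n - l)%N = false by move: hl1 hl; rewrite eqE /=; bl.
  by rewrite mulr0.
have -> : (p == n + k)%N = false by bl.
have -> : (p == n - (n - p))%N = true by bl.
have -> : (k == 0%N) = false by bl.
have -> : (p%:Z - n%:Z == k%:Z) = false by bl.
have -> : (p%:Z - n%:Z < 0) = true by bl.
have -> : absz (p%:Z - n%:Z) = (n - p)%N by lia.
by rewrite mulr1 addr0 subrr.
Qed.

Lemma rec0 h n m : (1 <= n)%N -> leq_ser (Hser h n) (lmonom R n%:Z) ->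
  lcoef (Hser h (0 + n)) m = recR h n 0 m.
Proof.
move=> hn Hn; rewrite add0n Hn lcoef_monom /recR big1 => [|l _]; last by rewrite /Hc /= mul0r.
rewrite subr0 /=.
by have -> : (m - n%:Z == 0) = (m == n%:Z) by rewrite subr_eq0.
Qed.

Lemma iff_part h n : (1 <= n)%N -> in_Sn n h <-> in_rec n h.
Proof.
move=> hn; split.
  move=> [HX Hn]; split => // j m; rewrite rec_coef.
  case: (posnP j) => [->|hj]; first exact: rec0.
  case: (lerP 0 m) => hm.
    have -> : m = (absz m)%:Z by lia.
    by rewrite addnC nonneg.
  have := HX j (absz m) hj ltac:(lia).
  rewrite /Xcomp CS_coef //.
  have -> : - (absz m)%:Z = m by lia.
  by rewrite addnC => /eqP; rewrite subr_eq0 => /eqP.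
move=> [Hn Hr]; split => // k l hk hl.
by rewrite /Xcomp CS_coef // addnC (Hr k) rec_coef subrr.
Qed.

Lemma Hc_coef h j l : (1 <= j)%N -> (1 <= l)%N -> Hc h j l = lcoef (Hser h j) (- l%:Z).
Proof.
move=> hj hl; rewrite lcoef_Hser /Hc.
have -> : (j == 0%N) = false by bl.
have -> : (- l%:Z == j%:Z) = false by bl.
have -> : (- l%:Z < 0) = true by bl.
by have -> : absz (- l%:Z) = l by lia.
Qed.

Lemma inj_part h h' n : (1 <= n)%N -> in_rec n h -> in_rec n h' ->
  (forall a : nat, (1 <= a)%N -> (a <= n - 1)%N -> leq_ser (Hser h a) (Hser h' a)) ->
  H_eq h h'.
Proof.
move=> hn [Hn Hr] [Hn' Hr'] Hb k; elim/ltn_ind: k => k IH m.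
case: (posnP k) => [->|hk]; first by [].
case: (ltngtP k n) => hkn.
- by apply: Hb; lia.
- have Ek : k = ((k - n) + n)%N by lia.
  rewrite Ek (Hr (k - n)%N) (Hr' (k - n)%N) !rec_coef /recR.
  rewrite (IH (k - n)%N ltac:(lia)); congr (_ - _).
  apply: eq_big_seq => l; rewrite mem_iota => /andP[hl1 hl2].
  rewrite !Hc_coef; try lia.
  by rewrite (IH (k - n)%N ltac:(lia)) (IH (n - l)%N ltac:(lia)).
- by rewrite hkn Hn Hn'.
Qed.

Section Constr.
Variable n : nat.
Hypothesis hn : (1 <= n)%N.
Variable c : nat -> nat -> R.

Definition base (k : nat) : nat -> R := if k == n then (fun _ => 0) else c k.
Definition step (j : nat) (r : nat -> R) (l : nat) : R :=
  lcoef (Hser (fun _ => r) j) (- l%:Z - n%:Z) -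
  \sum_(l' <- iota 1 n) Hc (fun _ => r) j l' * lcoef (Hser c (n - l')) (- l%:Z).
Fixpoint row (u k : nat) : nat -> R :=
  match u with
  | 0 => base k
  | u'.+1 => if (k <= n)%N then base k else step (k - n)%N (row u' (k - n)%N)
  end.
Definition hh k := row k k.

Lemma row_fuel (u u' k : nat) : (k <= u)%N -> (k <= u')%N -> row u k = row u' k.
Proof.
elim: u u' k => [|u IH] [|u'] k hf hf' //=.
- by have -> : k = 0%N by lia.
- by have -> : k = 0%N by lia.
- case: ifP => // hkn; congr step; apply: IH; lia.
Qed.

Lemma hh_small a : (a <= n)%N -> hh a = base a.
Proof. by case: a => [|a] // ha; rewrite /hh /= ifT. Qed.

Lemma hh_big k : (n < k)%N -> hh k = step (k - n)%N (hh (k - n)%N).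
Proof.
case: k => [|k] hk; first by lia.
rewrite /hh /=; have -> : (k.+1 <= n)%N = false by bl.
by rewrite (row_fuel (u' := (k.+1 - n)%N)) //; lia.
Qed.

Lemma Hser_small a m : (a < n)%N -> lcoef (Hser hh a) m = lcoef (Hser c a) m.
Proof.
move=> ha; rewrite !lcoef_Hser hh_small ?(ltnW ha) // /base.
by have -> : (a == n) = false by bl.
Qed.

Lemma hh_Hn : leq_ser (Hser hh n) (lmonom R n%:Z).
Proof.
move=> m; rewrite lcoef_Hser lcoef_monom hh_small // /base eqxx.
have -> : (n == 0%N) = false by bl.
by case: (m == n%:Z) => //; case: (m < 0).
Qed.

Lemma hh_rec : in_rec n hh.
Proof.
split; first exact: hh_Hn.
move=> j m; rewrite rec_coef.
case: (posnP j) => [->|hj]; first by apply: rec0 => //; exact: hh_Hn.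
case: (lerP 0 m) => hm.
  have -> : m = (absz m)%:Z by lia.
  by rewrite addnC nonneg.
rewrite lcoef_Hser.
have -> : (j + n == 0)%N = false by bl.
have -> : (m == (j + n)%:Z) = false by bl.
rewrite hm hh_big; last by lia.
have -> : (j + n - n = j)%N by lia.
rewrite /step /recR.
have -> : - (absz m)%:Z = m by lia.
congr (_ - _).
apply: eq_big_seq => l; rewrite mem_iota => /andP[hl1 hl2].
by rewrite Hser_small //; lia.
Qed.

End Constr.

End L.

Theorem mainTheorem6 (R : comNzRingType) (n : nat) (hn : (1 <= n)%N) :
  (* S_n coincides with the set defined by H^(n) = z^n and the recursion *)
  (forall h : nat -> nat -> R, in_Sn n h <-> in_rec n h) /\
  (* H |-> (H^(1), ..., H^(n-1)) is injective on S_n *)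
  (forall h h' : nat -> nat -> R, in_Sn n h -> in_Sn n h' ->
     (forall a : nat, (1 <= a)%N -> (a <= n - 1)%N -> leq_ser (Hser h a) (Hser h' a)) ->
     H_eq h h') /\
  (* ... and onto all (n-1)-tuples z^a + sum_{l>=1} c_{a,l} z^{-l}, 1 <= a <= n-1 *)
  (forall c : nat -> nat -> R, exists h : nat -> nat -> R,
     in_Sn n h /\
     forall a l : nat, (1 <= a)%N -> (a <= n - 1)%N -> (1 <= l)%N -> h a l = c a l).
Proof.
split; first by move=> h; apply: iff_part.
split.
  move=> h h' H1 H2; apply: inj_part => //; by apply/iff_part.
move=> c; exists (hh n c); split.
  by apply/iff_part => //; apply: hh_rec.
move=> a l ha1 ha2 hl; rewrite hh_small /base; last by lia.
by have -> : (a == n) = false by bl.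
Qed.
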